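(* Let $G=K_n$ with $n\geq 3$, let $g:A\to B$ be a function with $s=|g(A)|$ satisfying $2<s<n$. If some $n-s+1$ vertices of $A$ have the same image under $g$ (i.e. $|g^{-1}(v)|=n-s+1$ for some $v\in B$), then $fix(F_G)=2n-(s+3)$.
   Context: A set $S\subseteq V(H)$ is a fixing set of a graph $H$ if the only automorphism of $H$ fixing every vertex of $S$ is the identity; $fix(H)$ is the minimum cardinality of a fixing set of $H$. Functigraph: let $G_1,G_2$ be disjoint copies of a connected graph $G$, with $A=V(G_1)$, $B=V(G_2)$, and let $g:A\to B$ be a function. The functigraph $F_G$ has vertex set $A\cup B$ and edge set $E(G_1)\cup E(G_2)\cup\{ug(u):u\in A\}$. *)

(* Defs.v *)
From mathcomp Require Import all_boot all_fingroup.
Set Implicit Arguments. Unset Strict Implicit. Unset Printing Implicit Defensive.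

(* A graph is given by its (symmetric, irreflexive) adjacency relation e on a finite vertex type. *)

Definition is_automorphism (T : finType) (e : rel T) (p : {perm T}) : bool :=
  [forall x, forall y, e (p x) (p y) == e x y].

Definition fixing_set (T : finType) (e : rel T) (S : {set T}) : bool :=
  [forall p : {perm T},
     (is_automorphism e p && [forall x in S, p x == x]) ==> (p == 1%g)].

Lemma fixing_setT (T : finType) (e : rel T) : fixing_set e [set: T].
Proof.
apply/forallP => p; apply/implyP => /andP [_ /forallP Hp].
apply/eqP/permP => x; rewrite perm1.
by have := Hp x; rewrite in_setT /= => /eqP.
Qed.

Lemma fixing_exists (T : finType) (e : rel T) :
  exists k, [exists S : {set T}, fixing_set e S && (#|S| == k)].
Proof. by exists #|[set: T]|; apply/existsP; exists [set: T]; rewrite fixing_setT eqxx. Qed.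

Definition fix_number (T : finType) (e : rel T) : nat := ex_minn (fixing_exists e).

(* Functigraph F_G: vertex set A ∪ B, realised as T + T (inl = A = V(G1), inr = B = V(G2));
   edges: E(G1) ∪ E(G2) ∪ {u g(u) : u ∈ A}. *)
Definition functigraph (T : finType) (eG : rel T) (g : T -> T) : rel (T + T) :=
  fun x y =>
    match x, y with
    | inl u, inl v => eG u v
    | inr u, inr v => eG u v
    | inl u, inr v => g u == v
    | inr v, inl u => g u == v
    end.

Definition complete_graph (n : nat) : rel 'I_n := fun i j => i != j.

(* Main.v *)
Require Import Defs.
From mathcomp Require Import all_boot all_fingroup.
From mathcomp Require Import zify.

Section S.
Variables (n : nat) (g : 'I_n -> 'I_n).
Local Notation e := (functigraph (@complete_graph n) g).

Lemma inl_inj' : injective (@inl 'I_n 'I_n).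
Proof. by move=> x y []. Qed.
Lemma inr_inj' : injective (@inr 'I_n 'I_n).
Proof. by move=> x y []. Qed.

Lemma autE [p : {perm ('I_n + 'I_n)}] : is_automorphism e p -> forall x y, e (p x) (p y) = e x y.
Proof. by move/forallP=> H x y; move: (H x) => /forallP /(_ y) /eqP. Qed.

Lemma deg_aut (p : {perm ('I_n + 'I_n)}) x : is_automorphism e p ->
  #|[set y | e (p x) y]| = #|[set y | e x y]|.
Proof.
move=> Ha.
have -> : [set y | e (p x) y] = p @: [set y | e x y].
  apply/setP=> y; rewrite inE; apply/idP/imsetP.
  - by move=> H; exists ((p^-1)%g y); rewrite ?permKV // inE -(autE Ha) permKV.
  - by case=> z; rewrite inE => Hz ->; rewrite autE.
by rewrite card_imset //; apply: perm_inj.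
Qed.

Lemma deg_inl a : n.-1 < #|[set y | e (inl a) y]|.
Proof.
have -> : n.-1 = #|(@inl 'I_n 'I_n) @: [set~ a]| by rewrite card_imset ?cardsC1 ?card_ord //; apply: inl_inj'.
apply: proper_card; apply/properP; split.
- apply/subsetP => y /imsetP [c]; rewrite !inE => Hc ->.
  by rewrite /functigraph /complete_graph eq_sym.
- exists (inr (g a)); first by rewrite inE /functigraph eqxx.
  by apply/imsetP => [[c _]].
Qed.

Lemma deg_inr a : n.-1 < #|[set y | e (inr (g a)) y]|.
Proof.
have -> : n.-1 = #|(@inr 'I_n 'I_n) @: [set~ g a]| by rewrite card_imset ?cardsC1 ?card_ord //; apply: inr_inj'.
apply: proper_card; apply/properP; split.
- apply/subsetP => y /imsetP [c]; rewrite !inE => Hc ->.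
  by rewrite /functigraph /complete_graph eq_sym.
- exists (inl a); first by rewrite inE /functigraph eqxx.
  by apply/imsetP => [[c _]].
Qed.

Lemma deg_N b : b \notin g @: setT -> #|[set y | e (inr b) y]| = n.-1.
Proof.
move=> Hb.
have -> : [set y | e (inr b) y] = inr @: [set~ b].
  apply/setP => y; rewrite inE; case: y => [c|c] /=.
  - have -> : (g c == b) = false by apply/negbTE; apply: contra Hb => /eqP <-; apply: imset_f.
    by symmetry; apply/negbTE/imsetP => [[d _]].
  - rewrite (mem_imset _ _ inr_inj') !inE /complete_graph eq_sym //.
by rewrite card_imset ?cardsC1 ?card_ord //; apply: inr_inj'.
Qed.

Lemma swap_aut (sg tu : {perm 'I_n}) : (forall a, g (sg a) = tu (g a)) ->
  forall S, fixing_set e S -> (forall a, inl a \in S -> sg a = a) ->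
  (forall b, inr b \in S -> tu b = b) -> (forall a, sg a = a) /\ (forall b, tu b = b).
Proof.
move=> Hc S HS HSa HSb.
pose f (x : 'I_n + 'I_n) : 'I_n + 'I_n :=
  match x with inl a => inl (sg a) | inr b => inr (tu b) end.
have finj : injective f.
  by case=> [a|b] [a'|b'] //= [] /perm_inj ->.
pose p := perm finj.
have Hp : p == 1%g.
  move/forallP: HS => /(_ p) /implyP; apply; apply/andP; split.
  - apply/forallP => x; apply/forallP => y; rewrite !permE.
    case: x => [a|b]; case: y => [a'|b'];
      rewrite /f /functigraph /complete_graph ?(inj_eq perm_inj) // ?Hc ?(inj_eq perm_inj) //.
  - apply/forallP => x; apply/implyP; rewrite permE; case: x => [a|b] /= H.
    + by rewrite HSa.
    + by rewrite HSb.
move/eqP: Hp => Hp; split.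
- by move=> a; have := permE finj (inl a); rewrite -/p Hp perm1 /= => -[].
- by move=> b; have := permE finj (inr b); rewrite -/p Hp perm1 /= => -[].
Qed.

Variable v : 'I_n.
Local Notation s := #|g @: [set: 'I_n]|.
Hypothesis Hn : 3 <= n.
Hypothesis Hs : 2 < s < n.
Hypothesis Hv : #|g @^-1: [set v]| = n - s + 1.

Lemma ginj a a' : g a != v -> g a = g a' -> a = a'.
Proof.
move=> Ha Hg.
pose F := g @^-1: [set v].
have imC : g @: (~: F) = (g @: setT) :\ v.
  apply/setP=> b; rewrite !inE; apply/imsetP/andP.
  - case=> c; rewrite !inE => Hc ->; split => //; exact: imset_f.
  - by case=> Hb /imsetP [c _ Ec]; exists c => //; rewrite !inE -Ec.
have [c Hc] : exists c, c \in F by apply/set0Pn; rewrite -card_gt0 Hv addn1.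
have hv : v \in g @: setT by move: Hc; rewrite !inE => /eqP <-; exact: imset_f.
have c1 : #|g @: (~: F)| = s - 1.
  by rewrite imC; have := cardsD1 v (g @: [set: 'I_n]); rewrite hv /= => ->; rewrite addKn.
have c2 : #|~: F| = s - 1.
  by have := cardsC F; rewrite card_ord Hv; lia.
have /imset_injP Hi : #|g @: (~: F)| == #|~: F| by rewrite c1 c2.
apply: Hi => //; rewrite !inE //; by rewrite -Hg.
Qed.

Lemma lower S : fixing_set e S -> 2 * n - (s + 3) <= #|S|.
Proof.
move=> HS.
pose K1 a : 'I_n + 'I_n := if inl a \in S then inl a else inr (g a).
pose I1 := [set a | (inl a \in S) || ((g a != v) && (inr (g a) \in S))].
pose N := ~: (g @: [set: 'I_n]).
pose I2 := N :&: [set b | inr b \in S].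
have K1inj : {in I1 &, injective K1}.
  move=> a a'; rewrite !inE /K1.
  case: (boolP (inl a \in S)) => Ha; case: (boolP (inl a' \in S)) => Ha' //=.
  - by move=> _ _ [->].
  - by move=> /andP [Hgv _] _ [] /(ginj _ _ Hgv).
have cardS : #|I1| + #|I2| <= #|S|.
  have -> : #|I1| + #|I2| = #|K1 @: I1 :|: inr @: I2|.
    rewrite cardsU card_in_imset // card_imset; last exact: inr_inj'.
    suff -> : K1 @: I1 :&: inr @: I2 = set0 by rewrite cards0 subn0.
    apply/setP => x; rewrite !inE; apply/negbTE/andP => [[/imsetP [a Ha ->] /imsetP [b]]].
    rewrite !inE /K1 => /andP [Hb _]; case: (inl a \in S) => // [[Hgb]].
    by rewrite -Hgb imset_f in Hb.
  apply: subset_leq_card; apply/subsetP => x; rewrite inE => /orP [/imsetP [a Ha ->] | /imsetP [b Hb ->]].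
  - move: Ha; rewrite inE /K1; case: ifP => [//|H]; by rewrite ?H /= => /andP [_ ->].
  - by move: Hb; rewrite !inE => /andP [_ ->].
have cardI1 : n - 2 <= #|I1|.
  have := cardsC I1; rewrite card_ord.
  suff : #|~: I1| <= 2 by lia.
  rewrite -(cardsID (g @^-1: [set v]) (~: I1)).
  have h1 : #|~: I1 :&: g @^-1: [set v]| <= 1.
    apply/card_le1_eqP => a a'; rewrite !inE !negb_or.
    move=> /andP [/andP [Ha _] /eqP Hga] /andP [/andP [Ha' _] /eqP Hga'].
    case: (eqVneq a a') => [->//|Hne]; exfalso.
    have [] := swap_aut (tperm a a') (1%g) _ S HS.
    - by move=> c; rewrite perm1; case: tpermP => [->|->|//]; rewrite Hga Hga'.
    - by move=> c Hc; apply: tpermD; [apply: contraNneq Ha => -> | apply: contraNneq Ha' => ->].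
    - by move=> b _; rewrite perm1.
    by move=> /(_ a); rewrite tpermL => Ea _; rewrite Ea eqxx in Hne.
  have h2 : #|~: I1 :\: g @^-1: [set v]| <= 1.
    apply/card_le1_eqP => a a'; rewrite !inE.
    move=> /andP [Hgv /norP [Ha Hb]] /andP [Hgv' /norP [Ha' Hb']].
    rewrite Hgv /= in Hb; rewrite Hgv' /= in Hb'.
    case: (eqVneq a a') => [->//|Hne]; exfalso.
    have [] := swap_aut (tperm a a') (tperm (g a) (g a')) _ S HS.
    - move=> c; case: tpermP => [->|->|Hca Hca']; [by rewrite tpermL | by rewrite tpermR|].
      rewrite tpermD //.
      + by apply/eqP => /(ginj _ _ Hgv) E; apply: Hca; rewrite E.
      + by apply/eqP => /(ginj _ _ Hgv') E; apply: Hca'; rewrite E.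
    - by move=> c Hc; apply: tpermD; [apply: contraNneq Ha => -> | apply: contraNneq Ha' => ->].
    - by move=> b Hc; apply: tpermD; [apply: contraNneq Hb => -> | apply: contraNneq Hb' => ->].
    by move=> /(_ a); rewrite tpermL => Ea _; rewrite Ea eqxx in Hne.
  lia.
have cardI2 : #|N| - 1 <= #|I2|.
  have := cardsID [set b | inr b \in S] N; rewrite -/I2 => HI.
  suff: #|N :\: [set b | inr b \in S]| <= 1 by move: HI; lia.
  apply/card_le1_eqP => b b'; rewrite !inE => /andP [Hb Hbn] /andP [Hb' Hbn'].
  case: (eqVneq b b') => [->//|Hne]; exfalso.
  have [] := swap_aut (1%g) (tperm b b') _ S HS.
  - move=> c; rewrite perm1 tpermD //.
    + by apply: contraNneq Hbn => ->; apply/imsetP; exists c.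
    + by apply: contraNneq Hbn' => ->; apply/imsetP; exists c.
  - by move=> c _; rewrite perm1.
  - by move=> c Hc; apply: tpermD; [apply: contraNneq Hb => -> | apply: contraNneq Hb' => ->].
  by move=> _ /(_ b); rewrite tpermL => Ea; rewrite Ea eqxx in Hne.
have cardN : #|N| = n - s by rewrite /N; have := cardsC (g @: [set: 'I_n]); rewrite card_ord; lia.
lia.
Qed.

Lemma upper : exists S0, fixing_set e S0 && (#|S0| == 2 * n - (s + 3)).
Proof.
pose F := g @^-1: [set v].
have [a0 [a1 [Ha0 Ha1 Ha01]]] : exists a0 a1, [/\ a0 \in F, a1 \in F & a0 != a1].
  by apply/card_gt1P; rewrite Hv; lia.
move: Ha0 Ha1; rewrite !inE => /eqP ga0 /eqP ga1.
have [p0 Hp0] : exists p0, p0 \in ~: F.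
  by apply/set0Pn; rewrite -card_gt0; have := cardsC F; rewrite card_ord Hv; lia.
move: Hp0; rewrite !inE => gp0.
pose N := ~: (g @: [set: 'I_n]).
have cardN : #|N| = n - s by rewrite /N; have := cardsC (g @: [set: 'I_n]); rewrite card_ord; lia.
have [b0 Hb0] : exists b0, b0 \in N by apply/set0Pn; rewrite -card_gt0 cardN; lia.
have Hb0N : b0 \notin g @: [set: 'I_n] by move: Hb0; rewrite inE.
have gb0 : forall a, g a != b0.
  by move=> a; apply: contraNneq Hb0N => <-; apply: imset_f.
have a0p0 : a0 != p0 by apply: contraNneq gp0 => <-; rewrite ga0.
have a1p0 : a1 != p0 by apply: contraNneq gp0 => <-; rewrite ga1.
pose S0 := (@inl 'I_n 'I_n) @: (~: [set a0; p0]) :|: (@inr 'I_n 'I_n) @: (N :\ b0).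
exists S0; apply/andP; split; last first.
  rewrite cardsU (card_imset _ inl_inj') (card_imset _ inr_inj').
  have -> : (@inl 'I_n 'I_n) @: (~: [set a0; p0]) :&: (@inr 'I_n 'I_n) @: (N :\ b0) = set0.
    apply/setP => x; rewrite !inE; apply/negbTE/andP => [[/imsetP [a _ ->] /imsetP [b _]]] //.
  rewrite cards0 subn0.
  have c1 := cardsC [set a0; p0]; rewrite card_ord cards2 a0p0 in c1.
  have c2 := cardsD1 b0 N; rewrite Hb0 cardN in c2.
  apply/eqP; move: c1 c2 => /= c1 c2; lia.
have hSl : forall c, c != a0 -> c != p0 -> inl c \in S0.
  by move=> c H1 H2; rewrite inE (mem_imset _ _ inl_inj') !inE negb_or H1 H2.
have hSr : forall b, b \notin g @: [set: 'I_n] -> b != b0 -> inr b \in S0.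
  by move=> b H1 H2; rewrite inE (mem_imset _ _ inr_inj') !inE H1 H2 orbT.
apply/forallP => p; apply/implyP => /andP [Ha /forallP Hfix].
have HF : forall x, x \in S0 -> p x = x by move=> x Hx; exact/eqP/(implyP (Hfix x) Hx).
have Hinj : forall x y, p x = y -> y \in S0 -> x = y.
  by move=> x y Hxy Hy; apply: (@perm_inj _ p); rewrite Hxy (HF y Hy).
have Pb0 : p (inr b0) = inr b0.
  have Hd := deg_aut _ (inr b0) Ha; rewrite deg_N // in Hd.
  case E: (p (inr b0)) => [c|b].
    by rewrite E in Hd; have := deg_inl c; lia.
  case: (boolP (b \in g @: [set: 'I_n])) => Hb.
    by case/imsetP: Hb => a _ Eb; rewrite E Eb in Hd; have := deg_inr a; rewrite Hd ltnn.
  case: (eqVneq b b0) => [->//|Hne].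
  by have := Hinj _ _ E (hSr b Hb Hne) => -[Eq]; rewrite Eq eqxx in Hne.
have Hl : forall a, exists c, p (inl a) = inl c.
  move=> a; case E: (p (inl a)) => [c|b]; first by exists c.
  have := autE Ha (inr b0) (inl a); rewrite Pb0 E /= (negbTE (gb0 a)) => /negbFE /eqP Eb.
  subst b; rewrite -Pb0 in E; by have := perm_inj E.
have Hr : forall b, exists w, p (inr b) = inr w.
  move=> b; case: (eqVneq b b0) => [->|Hne]; first by exists b0.
  case E: (p (inr b)) => [c|w]; last by exists w.
  have := autE Ha (inr b0) (inr b); rewrite Pb0 E /= (negbTE (gb0 c)) /complete_graph eq_sym Hne //.
have Pv : p (inr v) = inr v.
  have Pa1 : p (inl a1) = inl a1 by apply: HF; apply: hSl; rewrite // eq_sym.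
  case: (Hr v) => w Ew; rewrite Ew.
  have := autE Ha (inl a1) (inr v); rewrite Pa1 Ew /= ga1 eqxx => /eqP -> //.
have Pa0 : p (inl a0) = inl a0.
  case: (Hl a0) => c Ec.
  have := autE Ha (inl a0) (inr v); rewrite Ec Pv /= ga0 eqxx => /eqP gc.
  have cp0 : c != p0 by apply: contraNneq gp0 => <-; rewrite gc.
  case: (eqVneq c a0) => [->//|Hne].
  by have := Hinj _ _ Ec (hSl c Hne cp0) => -[Eq]; rewrite Eq eqxx in Hne.
have Pp0 : p (inl p0) = inl p0.
  case: (Hl p0) => c Ec.
  case: (eqVneq c a0) => [Eca|Hne].
    by rewrite Eca -Pa0 in Ec; have := perm_inj Ec => -[Eq]; rewrite Eq eqxx in a0p0.
  case: (eqVneq c p0) => [Ecp|Hne']; first by rewrite Ec Ecp.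
  by have := Hinj _ _ Ec (hSl c Hne Hne') => -[Eq]; rewrite Eq eqxx in Hne'.
have HlA : forall a, p (inl a) = inl a.
  move=> a; case: (eqVneq a a0) => [->//|H1]; case: (eqVneq a p0) => [->//|H2].
  by apply: HF; apply: hSl.
have HrA : forall b, p (inr b) = inr b.
  move=> b; case: (boolP (b \in g @: [set: 'I_n])) => Hb.
    case/imsetP: Hb => a _ ->; case: (Hr (g a)) => w Ew; rewrite Ew.
    by have := autE Ha (inl a) (inr (g a)); rewrite HlA Ew /= eqxx => /eqP ->.
  case: (eqVneq b b0) => [->//|Hne].
  by apply: HF; apply: hSr.
by apply/eqP/permP => -[a|b]; rewrite perm1 ?HlA ?HrA.
Qed.
End S.

Theorem corollary3p3 (n : nat) (g : 'I_n -> 'I_n) :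
  3 <= n ->
  2 < #|g @: [set: 'I_n]| < n ->
  (exists v : 'I_n, #|g @^-1: [set v]| = n - #|g @: [set: 'I_n]| + 1) ->
  fix_number (functigraph (@complete_graph n) g) = 2 * n - (#|g @: [set: 'I_n]| + 3).
Proof.
move=> Hn Hs [v Hv].
rewrite /fix_number; case: ex_minnP => m /existsP [S /andP [HS /eqP HSm]] Hmin.
have [S0 /andP [HS0 /eqP HS0c]] := @upper n g v Hn Hs Hv.
have h1 := Hmin _ (introT existsP (ex_intro _ S0 (introT andP (conj HS0 (eqxx _))))).
have h2 := @lower n g v Hn Hs Hv S HS.
apply/eqP; rewrite eqn_leq; apply/andP; split; first by rewrite HS0c in h1.
by rewrite -HSm.
Qed.
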